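(* Let $X$ be a convex metric space over a Boolean ring $B$, $0\in X$, and suppose every element of $X$ is a convex combination of elements of $\{0,x_{1},\dots,x_{n}\}\subseteq X$, where $\{x_{1},\dots,x_{s}\}$ ($s\le n$) is an orthogonal set. Then there exist $a_{s+1},\dots,a_{n}\in B$ such that $\{x_{1},\dots,x_{s},a_{s+1}x_{s+1},\dots,a_{n}x_{n}\}\setminus\{0\}$ is a referential of $(X,0)$. In particular, every orthogonal subset of a pointed CFG-space $(X,0)$ can be extended to a referential of $(X,0)$.
   Context: $B$ is a Boolean ring ($a\vee b=a+b+ab$, $a\le b\iff ab=a$, $\bar a=1+a$; $a_1\oplus\cdots\oplus a_n$ denotes a sum of pairwise disjoint elements). A Boolean metric space over $B$: set $X$ with $d:X\times X\to B$, $d(x,y)=0\iff x=y$, symmetric, $d(x,z)\le d(x,y)\vee d(y,z)$. For $y_1,\dots,y_m\in X$, $b_i\in B$ with $b_1\oplus\cdots\oplus b_m=1$, $y$ is a convex combination of the $y_i$ with coefficients $b_i$ if $b_id(y,y_i)=0$ for all $i$; $X$ is convex if all such combinations exist; a CFG-space is a convex space all of whose elements are convex combinations of elements of some fixed finite subset. In $(X,0)$: $|x|=d(0,x)$; for $a\in B$, $ax$ denotes the convex combination of $x,0$ with coefficients $a,\bar a$. $x\perp y$ iff $d(x,y)=|x|\vee|y|$; a finite $R\subseteq X$ is orthogonal if $0\notin R$ and distinct elements are orthogonal; a referential of $(X,0)$ is an orthogonal $R$ such that every element of $X$ is a convex combination of elements of $R\cup\{0\}$. *)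

(* Defs.v *)
From HB Require Import structures.
From mathcomp Require Import all_boot all_order all_algebra.
Set Implicit Arguments. Unset Strict Implicit. Unset Printing Implicit Defensive.
Import GRing.Theory.
Local Open Scope ring_scope.

Section BooleanMetric.
Variable B : comPzRingType.

Definition boolean_ring := forall a : B, a * a = a.

Definition bleB (a b : B) : Prop := a * b = a.
Definition bjoin (a b : B) : B := a + b + a * b.
Definition bcompl (a : B) : B := 1 + a.

Definition disjoint_partition (m : nat) (b : 'I_m -> B) : Prop :=
  (forall i j : 'I_m, i <> j -> b i * b j = 0) /\ \sum_(i < m) b i = 1.

Variable X : Type.
Variable d : X -> X -> B.

Definition bool_metric : Prop :=
  (forall x y, d x y = 0 <-> x = y) /\
  (forall x y, d x y = d y x) /\
  (forall x y z, bleB (d x z) (bjoin (d x y) (d y z))).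

Definition is_convex_comb (y : X) (m : nat) (ys : 'I_m -> X) (b : 'I_m -> B) : Prop :=
  forall i, b i * d y (ys i) = 0.

Definition convex_space : Prop :=
  forall (m : nat) (ys : 'I_m -> X) (b : 'I_m -> B),
    disjoint_partition b -> exists y, is_convex_comb y ys b.

Definition bm_cc_of (S : X -> Prop) (y : X) : Prop :=
  exists (m : nat) (ys : 'I_m -> X) (b : 'I_m -> B),
    disjoint_partition b /\ (forall i, S (ys i)) /\ is_convex_comb y ys b.

Definition CFG_space : Prop :=
  convex_space /\
  exists (k : nat) (F : 'I_k -> X), forall y, bm_cc_of (fun u => exists i, F i = u) y.

Variable o : X.

Definition bnorm (x : X) : B := d o x.

(* y = a x, i.e. y is the convex combination of x, 0 with coefficients a, 1+a *)
Definition is_smul (a : B) (x y : X) : Prop :=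
  a * d y x = 0 /\ bcompl a * d y o = 0.

Definition bperp (x y : X) : Prop := d x y = bjoin (bnorm x) (bnorm y).

Definition finite_set (R : X -> Prop) : Prop :=
  exists (k : nat) (f : 'I_k -> X), forall u, R u <-> exists i, f i = u.

Definition bm_orthogonal (R : X -> Prop) : Prop :=
  finite_set R /\ ~ R o /\ (forall u v, R u -> R v -> u <> v -> bperp u v).

Definition bm_referential (R : X -> Prop) : Prop :=
  bm_orthogonal R /\ forall y, bm_cc_of (fun u => R u \/ u = o) y.

End BooleanMetric.

(* Main.v *)
Require Import Defs.
From mathcomp Require Import all_boot all_order all_algebra.
From Stdlib Require Import Ring Classical ClassicalEpsilon.
From Stdlib Require List Setoid.
Set Implicit Arguments. Unset Strict Implicit.
Import GRing.Theory.
Local Open Scope ring_scope.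

Section Main.
Variable B : comPzRingType.

Lemma Bth : @ring_theory (GRing.PzSemiRing.sort B) 0 1 +%R *%R (fun x y => x - y) -%R eq.
Proof. constructor; move=> *; rewrite ?add0r ?addrA ?mul1r ?mulrA ?mulrDl ?subrr //; try exact: addrC; try exact: mulrC. Qed.
Add Ring Bring : Bth.
Ltac bnorm :=
  repeat match goal with
  | |- context [@Algebra.add ?i ?x ?y] =>
     lazymatch i with
     | GRing_PzSemiRing__to__Algebra_BaseAddMagma _ => fail
     | _ => change (@Algebra.add i x y) with (@Algebra.add (GRing_PzSemiRing__to__Algebra_BaseAddMagma (GRing_ComPzRing__to__GRing_PzSemiRing B)) x y)
     end
  | |- context [@Algebra.zero ?i] =>
     lazymatch i with
     | GRing_PzSemiRing__to__Algebra_BaseAddUMagma _ => fail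
     | _ => change (@Algebra.zero i) with (@Algebra.zero (GRing_PzSemiRing__to__Algebra_BaseAddUMagma (GRing_ComPzRing__to__GRing_PzSemiRing B)))
     end
  end.
Ltac bring := rewrite -[LHS]mulr1 -[RHS]mulr1; bnorm; lazymatch goal with |- @eq _ ?l ?r => change (@eq (GRing.PzSemiRing.sort (GRing_ComPzRing__to__GRing_PzSemiRing B)) l r) end; ring.

Hypothesis hB : boolean_ring B.
Lemma char2 (a : B) : a + a = 0.
Proof.
have h := hB (a + a).
have e : (a + a) * (a + a) = (a * a + a * a) + (a * a + a * a) by bring.
rewrite e !hB in h.
have := congr1 (fun t => t - (a + a)) h; rewrite /= subrr.
by rewrite addrK.
Qed.

Lemma compl_mul (a : B) : (1 + a) * a = 0.
Proof. have -> : (1 + a) * a = a + a * a by bring. by rewrite hB char2. Qed.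

Lemma split_compl (a u : B) : u = a * u + (1 + a) * u.
Proof. have -> : a * u + (1 + a) * u = u + (a + a) * u by bring. by rewrite char2 mul0r addr0. Qed.

Lemma bjoin_compl (a : B) : bjoin a (1 + a) = 1.
Proof. rewrite /bjoin. have -> : a + (1 + a) + a * (1 + a) = 1 + (a+a) + (a + a * a) by bring.
by rewrite hB !char2 !addr0. Qed.

Lemma bjoin_compl2 (e f : B) : bjoin (1 + e) (1 + f) = 1 + e * f.
Proof. rewrite /bjoin.
have -> : 1 + e + (1 + f) + (1 + e) * (1 + f) = 1 + e * f + (1+1) + (e+e) + (f+f) by bring.
by rewrite !char2 !addr0. Qed.

Lemma compl_compl (b : B) : 1 + (1 + b) = b.
Proof. have -> : 1 + (1 + b) = b + (1 + 1) by bring. by rewrite char2 addr0. Qed.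

Variable X : Type.
Variable d : X -> X -> B.
Hypothesis hd : bool_metric d.

Lemma dsym x y : d x y = d y x. Proof. by case: hd => _ [h _]. Qed.
Lemma dxx x : d x x = 0. Proof. by case: hd => [h _]; apply (proj2 (h x x)). Qed.
Lemma d0 x y : d x y = 0 -> x = y. Proof. by case: hd => [h _]; apply (proj1 (h x y)). Qed.
Lemma tri x y z : d x z * (d x y + d y z + d x y * d y z) = d x z.
Proof. by case: hd => _ [_ h]; apply: h. Qed.

Lemma trans0 c x y z : c * d x y = 0 -> c * d y z = 0 -> c * d x z = 0.
Proof.
move=> h1 h2.
have : c * d x z = d x z * (c * d x y) + d x z * (c * d y z) + d x z * d y z * (c * d x y).
  by rewrite -{1}(tri x y z); bring.
by rewrite h1 h2 !mulr0 !addr0.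
Qed.

Lemma LS c x y w : c * d x y = 0 -> c * d x w = c * d y w.
Proof.
move=> h.
have h' : c * d y x = 0 by rewrite dsym.
have e1 : c * d x w = c * d x w * d y w.
  have : c * d x w = d x w * (c * d x y) + c * d x w * d y w + d x w * d y w * (c * d x y).
    by rewrite -{1}(tri x y w); bring.
  by rewrite h !mulr0 add0r addr0.
have e2 : c * d y w = c * d y w * d x w.
  have : c * d y w = d y w * (c * d y x) + c * d y w * d x w + d y w * d x w * (c * d y x).
    by rewrite -{1}(tri y x w); bring.
  by rewrite h' !mulr0 add0r addr0.
by rewrite e1 e2; bring.
Qed.

Arguments LS : clear implicits.
Arguments LS c x y w.
Section Loc.
Variable p : nat.
Variable w : 'I_p -> X.

Definition locc (x : X) (c : B) := exists e : 'I_p -> B,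
  (forall j k, j <> k -> e j * e k = 0) /\ \sum_j e j = c /\ forall j, e j * d x (w j) = 0.

Lemma locc_eq x c c' : c = c' -> locc x c -> locc x c'.
Proof. by move=> ->. Qed.

Lemma locc_base x j0 : x = w j0 -> locc x 1.
Proof.
move=> ->; exists (fun k => if k == j0 then 1 else 0); split; [|split].
- move=> j k jk /=. case: (j =P j0) => [ej|_]; last by rewrite mul0r.
  case: (k =P j0) => [ek|_]; last by rewrite mulr0. by case: jk; rewrite ej ek.
- rewrite (bigD1 j0) //= eqxx big1 ?addr0 // => k /negbTE ->; done.
- move=> j /=; case: (j =P j0) => [->|_]; by rewrite ?dxx ?mulr0 ?mul0r.
Qed.

Lemma locc_zero x : locc x 0.
Proof. exists (fun _ => 0); split; [|split]; move=> *; rewrite ?mul0r ?big1 //. Qed.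

Lemma locc_transfer x y b c : locc y c -> b * d x y = 0 -> locc x (b * c).
Proof.
move=> [e [he1 [he2 he3]]] hb; exists (fun j => b * e j); split; [|split].
- move=> j k jk. have -> : b * e j * (b * e k) = (b * b) * (e j * e k) by bring.
  by rewrite he1 // mulr0.
- by rewrite -mulr_sumr he2.
- move=> j. have hb' : b * d x y = 0 by [].
  have := LS b x y (w j) hb'. move=> h.
  have -> : b * e j * d x (w j) = e j * (b * d x (w j)) by bring.
  rewrite h. have -> : e j * (b * d y (w j)) = b * (e j * d y (w j)) by bring.
  by rewrite he3 mulr0.
Qed.

Lemma part_le (e : 'I_p -> B) c j : (forall j k, j <> k -> e j * e k = 0) -> \sum_j e j = c ->
  e j * c = e j.
Proof.
move=> h1 <-; rewrite mulr_sumr (bigD1 j) //= big1 ?addr0 ?hB //.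
move=> k /eqP kj; apply: h1 => ee; apply: kj; by rewrite ee.
Qed.

Arguments part_le : clear implicits.
Arguments part_le e c j.
Lemma locc_glue x c c' : locc x c -> locc x c' -> locc x (bjoin c c').
Proof.
move=> [e [he1 [he2 he3]]] [f [hf1 [hf2 hf3]]].
have hec : forall j, e j * (1 + c) = 0.
  move=> j; have -> : e j * (1 + c) = e j + e j * c by bring.
  by rewrite (part_le e c j he1 he2) char2.
exists (fun j => e j + (1 + c) * f j); split; [|split].
- move=> j k jk.
  have -> : (e j + (1 + c) * f j) * (e k + (1 + c) * f k) =
     e j * e k + (e j * (1 + c)) * f k + (e k * (1 + c)) * f j + (1 + c) * (1 + c) * (f j * f k) by bring.
  by rewrite he1 // hf1 // !hec !mul0r !mulr0 !addr0.
- rewrite big_split /= -mulr_sumr he2 hf2 /bjoin; bring.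
- move=> j. have -> : (e j + (1 + c) * f j) * d x (w j) = e j * d x (w j) + (1 + c) * (f j * d x (w j)) by bring.
  by rewrite he3 hf3 mulr0 addr0.
Qed.

Lemma locc_glueQ x e f : locc x (1 + e) -> locc x (1 + f) -> locc x (1 + e * f).
Proof. move=> h1 h2; rewrite -bjoin_compl2; exact: locc_glue. Qed.

Lemma locc_prod x (I : Type) (r : seq I) (P : pred I) (F : I -> B) :
  (forall i, P i -> locc x (1 + F i)) -> locc x (1 + \prod_(i <- r | P i) F i).
Proof.
move=> h; apply: (big_ind (fun t => locc x (1 + t))) => //.
- by rewrite char2; exact: locc_zero.
- move=> *; exact: locc_glueQ.
Qed.

Lemma locc_cc (S : X -> Prop) x : (forall j, S (w j)) -> locc x 1 -> bm_cc_of d S x.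
Proof.
move=> hS [e [h1 [h2 h3]]]; exists p, w, e; split; [|split] => //.
Qed.

End Loc.

Lemma bperp_sym o u v : bperp d o u v -> bperp d o v u.
Proof. rewrite /bperp dsym => ->; rewrite /bjoin; bring. Qed.

Lemma list_filter (P : X -> Prop) (l : list X) :
  exists l', forall u, List.In u l' <-> List.In u l /\ P u.
Proof.
elim: l => [|h t [l' IH]]; first by exists nil; move=> u /=; tauto.
case: (classic (P h)) => hP.
- exists (h :: l') => u /=; rewrite IH; split.
  + move=> [<-|[H1 H2]]; tauto.
  + move=> [[<-|H1] H2]; tauto.
- exists l' => u /=; rewrite IH; split.
  + tauto.
  + move=> [[<-|H1] H2]; tauto.
Qed.

Lemma list_fin (o : X) (l : list X) : finite_set (fun u => List.In u l).
Proof.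
exists (length l), (fun i => List.nth i l o) => u; split.
- move=> /(List.In_nth l u o) [k [hk <-]]. by exists (Ordinal (introT ltP hk)).
- move=> [i <-]; apply: List.nth_In; apply/ltP; exact: ltn_ord.
Qed.

Lemma in_enum_In k (i : 'I_k) : List.In i (enum 'I_k).
Proof.
have : i \in enum 'I_k by rewrite mem_enum.
elim: (enum 'I_k) => //= h t IH; rewrite in_cons => /orP [/eqP ->|/IH]; auto.
Qed.

Lemma fin_filter (o : X) k (f : 'I_k -> X) (P : X -> Prop) :
  finite_set (fun u => P u /\ exists i, f i = u).
Proof.
have [l' H] := list_filter P (List.map f (enum 'I_k)).
have [m [g hg]] := list_fin o l'.
exists m, g => u; rewrite -hg H List.in_map_iff; split.
- move=> [hP [i hi]]; split => //; exists i; split => //; exact: in_enum_In.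
- move=> [[i [hi _]] hP]; split => //; by exists i.
Qed.

Hypothesis hconv : convex_space d.
Variable o : X.

Lemma smul_ex a x : exists z, is_smul d o a x z.
Proof.
pose ys : 'I_2 -> X := fun k => if val k == 0%N then x else o.
pose b : 'I_2 -> B := fun k => if val k == 0%N then a else 1 + a.
have hp : disjoint_partition b.
  split.
  - move=> [[|[|i']] hi] [[|[|j']] hj] //= ij.
    + by case: ij; apply: val_inj.
    + by rewrite mulrC compl_mul.
    + by rewrite compl_mul.
    + by case: ij; apply: val_inj.
  - rewrite big_ord_recl big_ord1 /=. have -> : a + (1 + a) = 1 + (a + a) by bring.
    by rewrite char2 addr0.
have [y hy] := hconv ys hp.
exists y; split.
- exact: (hy ord0).
- exact: (hy (Ordinal (isT : (1 < 2)%N))).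
Qed.

Section Part1.
Variables (n s : nat) (x : 'I_n -> X).
Hypothesis horth : bm_orthogonal d o (fun u => exists i : 'I_n, (i < s)%N /\ x i = u).
Hypothesis hspan : forall y, bm_cc_of d (fun u => u = o \/ exists i, x i = u) y.

Definition aa (i : 'I_n) : B := d o (x i) * \prod_(j < n | (j < i)%N) d (x i) (x j).
Definition zs (i : 'I_n) := proj1_sig (constructive_indefinite_description _ (smul_ex (aa i) (x i))).
Definition zz (i : 'I_n) := if (i < s)%N then x i else zs i.

Lemma zz1 (i : 'I_n) : (i < s)%N -> zz i = x i.
Proof. by rewrite /zz => ->. Qed.

Lemma zz2 (i : 'I_n) : (s <= i)%N -> is_smul d o (aa i) (x i) (zz i).
Proof.
rewrite /zz leqNgt => /negbTE ->.
exact: (proj2_sig (constructive_indefinite_description _ (smul_ex (aa i) (x i)))).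
Qed.

Lemma hA (i : 'I_n) : aa i * d o (x i) = aa i.
Proof.
rewrite /aa; set P := \prod_(_ < _ | _) _.
have -> : d o (x i) * P * d o (x i) = (d o (x i) * d o (x i)) * P by bring.
by rewrite hB.
Qed.

Lemma hAj (i j : 'I_n) : (j < i)%N -> aa i * d (x i) (x j) = aa i.
Proof.
move=> hji; rewrite /aa (bigD1 j) //=; set P := \prod_(_ < _ | _) _.
have -> : d o (x i) * (d (x i) (x j) * P) * d (x i) (x j) =
   d o (x i) * (d (x i) (x j) * d (x i) (x j)) * P by bring.
by rewrite hB mulrA.
Qed.

Lemma key (i j : 'I_n) : (s <= i)%N -> (j < i)%N -> bperp d o (zz i) (zz j).
Proof.
move=> hsi hji.
have [hz1 hz2] := zz2 hsi.
have hz2' : (1 + aa i) * d (zz i) o = 0 := hz2.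
rewrite /bperp /bnorm /bjoin.
have e1 : d (zz i) (zz j) = aa i * d (x i) (zz j) + (1 + aa i) * d o (zz j).
  by rewrite {1}(split_compl (aa i) (d (zz i) (zz j))) (LS _ _ _ _ hz1) (LS _ _ _ _ hz2').
have e2 : d o (zz i) = aa i.
  rewrite dsym (split_compl (aa i) (d (zz i) o)) (LS _ _ _ _ hz1) (LS _ _ _ _ hz2') dxx mulr0 addr0.
  by rewrite dsym hA.
have e3 : aa i * d (x i) (zz j) = aa i.
  case: (ltnP j s) => hjs; first by rewrite zz1 // hAj.
  have [hw1 hw2] := zz2 hjs.
  have hw2' : (1 + aa j) * d (zz j) o = 0 := hw2.
  rewrite dsym (split_compl (aa j) (d (zz j) (x i))) (LS _ _ _ _ hw1) (LS _ _ _ _ hw2').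
  have -> : aa i * (aa j * d (x j) (x i) + (1 + aa j) * d o (x i)) =
     aa j * (aa i * d (x i) (x j)) + (1 + aa j) * (aa i * d o (x i)) by rewrite (dsym (x j)); bring.
  by rewrite hAj // hA -split_compl.
rewrite e1 e2 e3; bring.
Qed.

Lemma zz_perp u v : (exists i, zz i = u) -> (exists j, zz j = v) -> u <> v -> bperp d o u v.
Proof.
move=> [i <-] [j <-] huv.
have ij : i <> j by move=> e; apply: huv; rewrite e.
case: (ltnP i s) => his; case: (ltnP j s) => hjs.
- rewrite !zz1 //. case: horth => _ [_ hp]; apply: hp.
  + by exists i. + by exists j. + by rewrite -(zz1 his) -(zz1 hjs).
- apply: bperp_sym; apply: key => //; exact: leq_trans his hjs.
- by apply: key => //; exact: leq_trans hjs his.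
- case: (ltngtP i j) => h.
  + by apply: bperp_sym; apply: key.
  + by apply: key.
  + by case: ij; apply: val_inj.
Qed.

Definition ww (j : 'I_n.+1) : X := if (insub (val j) : option 'I_n) is Some i then zz i else o.

Lemma ww_widen (i : 'I_n) : ww (widen_ord (leqnSn n) i) = zz i.
Proof. by rewrite /ww /= valK. Qed.

Lemma ww_max : ww ord_max = o.
Proof. by rewrite /ww /= insubN ?ltnn. Qed.

Lemma span_x (i : 'I_n) : locc ww (x i) 1.
Proof.
suff: forall k (i : 'I_n), (i < k)%N -> locc ww (x i) 1 by move=> h; apply: (h i.+1).
elim=> [|k IH] {}i hik //.
case: (ltnP i s) => his.
- apply: (locc_base (j0 := widen_ord (leqnSn n) i)); by rewrite ww_widen zz1.
- have [hz1 hz2] := zz2 his.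
  have L1 : locc ww (x i) (aa i).
    apply: (locc_eq (mulr1 _)); apply: (locc_transfer (y := zz i)).
    + apply: (locc_base (j0 := widen_ord (leqnSn n) i)); by rewrite ww_widen.
    + by rewrite dsym.
  have L2 : locc ww (x i) (1 + aa i).
    rewrite /aa; apply: locc_glueQ.
    + apply: (locc_eq (mulr1 _)); apply: (locc_transfer (y := o)).
      * apply: (locc_base (j0 := ord_max)); by rewrite ww_max.
      * by rewrite dsym compl_mul.
    + apply: locc_prod => j hj.
      apply: (locc_eq (mulr1 _)); apply: (locc_transfer (y := x j)).
      * apply: IH; exact: leq_trans hj hik.
      * exact: compl_mul.
  have := locc_glue L1 L2; by rewrite bjoin_compl.
Qed.

Lemma span_all y : bm_cc_of d (fun u => (u <> o /\ exists i, zz i = u) \/ u = o) y.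
Proof.
apply: (locc_cc (w := ww)).
  move=> j; rewrite /ww; case: insub => [i|]; last by right.
  case: (classic (zz i = o)) => h; [by right | left; split => //; by exists i].
have [m [ys [b [[hb1 hb2] [hys hcc]]]]] := hspan y.
have L k : locc ww y (b k).
  apply: (locc_eq (mulr1 _)); apply: (locc_transfer (y := ys k)); last exact: hcc.
  case: (hys k) => [->|[i <-]]; last exact: span_x.
  apply: (locc_base (j0 := ord_max)); by rewrite ww_max.
have LQ : locc ww y (1 + \prod_k (1 + b k)).
  apply: locc_prod => k _; rewrite compl_compl; exact: L.
have P0 : \prod_k (1 + b k) = 0.
  have -> : \prod_k (1 + b k) = \prod_k (1 + b k) * \sum_k b k by rewrite hb2 mulr1.
  rewrite mulr_sumr big1 // => k _; rewrite (bigD1 k) //=; set P := \prod_(_ < _ | _) _.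
  have -> : (1 + b k) * P * b k = P * ((1 + b k) * b k) by bring.
  by rewrite compl_mul mulr0.
by rewrite P0 addr0 in LQ.
Qed.

Lemma part1 : exists (a : 'I_n -> B) (z : 'I_n -> X),
       (forall i : 'I_n, (i < s)%N -> z i = x i) /\
       (forall i : 'I_n, (s <= i)%N -> is_smul d o (a i) (x i) (z i)) /\
       bm_referential d o (fun u => u <> o /\ exists i, z i = u).
Proof.
exists aa, zz; split; [exact: zz1|split; [exact: zz2|split]].
- split; [exact: fin_filter|split]; first by case.
  move=> u v [_ hu] [_ hv]; exact: zz_perp.
- exact: span_all.
Qed.
End Part1.

Lemma orth_iff (R R2 : X -> Prop) : (forall u, R u <-> R2 u) -> bm_orthogonal d o R -> bm_orthogonal d o R2.
Proof.
move=> h [[k [f hf]] [ho hp]]; split.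
- exists k, f => u; rewrite -h; exact: hf.
- split; first by rewrite -h.
  move=> u v /h hu /h hv; exact: hp.
Qed.

Lemma part2 : CFG_space d -> forall R, bm_orthogonal d o R ->
  exists R' : X -> Prop, (forall u, R u -> R' u) /\ bm_referential d o R'.
Proof.
move=> [_ [k [F hF]]] R hR.
have hR' := hR; case: hR' => [[kR [fR hfR]] [hRo hRp]].
pose x : 'I_(kR + k) -> X := fun i => match split i with inl i1 => fR i1 | inr i2 => F i2 end.
have hx1 (i1 : 'I_kR) : x (lshift k i1) = fR i1.
  rewrite /x; case: splitP => [j e|j e].
  + by congr fR; apply: val_inj; rewrite /= -e.
  + have h : (i1 : nat) = (kR + j)%N := e.
    by move: (ltn_ord i1); rewrite h ltnNge leq_addr.
have hx2 (i2 : 'I_k) : x (rshift kR i2) = F i2.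
  rewrite /x; case: splitP => [j e|j e].
  + have h : (kR + i2)%N = j := e.
    by move: (ltn_ord j); rewrite -h ltnNge leq_addr.
  + have h : (kR + i2 = kR + j)%N := e.
    by congr F; apply: val_inj => /=; apply: (@addnI kR); rewrite h.
have hsp : forall y, bm_cc_of d (fun u => u = o \/ exists i, x i = u) y.
  move=> y; have [m [ys [b [hb [hys hcc]]]]] := hF y.
  exists m, ys, b; split => //; split => // j.
  case: (hys j) => i <-; right; exists (rshift kR i); exact: hx2.
have hor : bm_orthogonal d o (fun u => exists i : 'I_(kR + k), (i < kR)%N /\ x i = u).
  apply: (orth_iff _ hR) => u; split.
  - move=> /hfR [i1 <-]; exists (lshift k i1); split; [exact: (ltn_ord i1) | exact: hx1].
  - move=> [i [hi <-]]; apply/hfR.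
    move: hi; rewrite /x; case: splitP => [j _ _|j _] //; by exists j.
have [a [z [hz1 [hz2 href]]]] := part1 hor hsp.
exists (fun u => u <> o /\ exists i, z i = u); split => //.
move=> u hu; split; first by move=> e; apply: hRo; rewrite -e.
have [i1 <-] := (proj1 (hfR u) hu).
exists (lshift k i1); rewrite hz1 ?hx1 //; exact: (ltn_ord i1).
Qed.

End Main.

Theorem mainTheorem12 (B : comPzRingType) (hB : boolean_ring B)
  (X : Type) (d : X -> X -> B) (hd : bool_metric d) (hconv : convex_space d)
  (o : X) :
  (forall (n s : nat) (x : 'I_n -> X),
     (s <= n)%N ->
     (forall y, bm_cc_of d (fun u => u = o \/ exists i, x i = u) y) ->
     bm_orthogonal d o (fun u => exists i : 'I_n, (i < s)%N /\ x i = u) ->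
     exists (a : 'I_n -> B) (z : 'I_n -> X),
       (forall i : 'I_n, (i < s)%N -> z i = x i) /\
       (forall i : 'I_n, (s <= i)%N -> is_smul d o (a i) (x i) (z i)) /\
       bm_referential d o (fun u => u <> o /\ exists i, z i = u))
  /\
  (CFG_space d ->
     forall R : X -> Prop, bm_orthogonal d o R ->
       exists R' : X -> Prop, (forall u, R u -> R' u) /\ bm_referential d o R').
Proof.
split.
- move=> n s x _ hsp hor; exact: (part1 hB hd hconv hor hsp).
- exact: (part2 hB hd hconv).
Qed.
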